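(* Let $p$ be an odd prime and let $d \geq 3$ be an odd integer. Suppose there exists a positive integer $t$ with $p^t \equiv -1 \pmod d$, and take $t$ minimal. Let $q=p^v \equiv 1 \pmod{2d}$. Then $v=2ts$ for some positive integer $s$. If $s$ is even, then $\omega\big(GP(q,d)\big)<\sqrt{q}$. If $s$ is odd, then $d \mid (\sqrt{q}+1)$ and $\omega\big(GP(q,d)\big)=\sqrt{q}$.
   Context: $GP(q,d)$ is the graph on $\mathbb{F}_q$ in which distinct $x,y$ are adjacent iff $x-y$ is a $d$-th power in $\mathbb{F}_q^*$; $\omega$ denotes clique number. *)

(* Defs.v *)
From mathcomp Require Import all_boot all_order all_algebra all_field.
Set Implicit Arguments. Unset Strict Implicit. Unset Printing Implicit Defensive.
Import GRing.Theory.
Local Open Scope ring_scope.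

(* Generalized Paley graph GP(q,d) on a finite field F (|F| = q):
   distinct x, y adjacent iff x - y is a d-th power of a nonzero element. *)
Definition gp_adj (F : finFieldType) (d : nat) (x y : F) : bool :=
  (x != y) && [exists z : F, (z != 0) && (z ^+ d == x - y)].

Definition gp_clique (F : finFieldType) (d : nat) (S : {set F}) : bool :=
  [forall x in S, forall y in S, (x != y) ==> gp_adj d x y].

Definition gp_omega (F : finFieldType) (d : nat) : nat :=
  (\max_(S : {set F} | gp_clique d S) #|S|)%N.

(* Main.v *)
Require Import Defs.
From mathcomp Require Import all_boot all_order all_algebra all_field all_solvable zify ring.
Set Implicit Arguments. Unset Strict Implicit. Unset Printing Implicit Defensive.
Import GRing.Theory.


Lemma Zd0 d m : (1 < d)%N -> ((m%:R : 'Z_d) == 0)%R = (d %| m)%N.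
Proof. by move=> d1; rewrite -(inj_eq val_inj) /= val_Zp_nat. Qed.

Lemma Zd_eqN1 d m : (1 < d)%N -> ((m%:R : 'Z_d) == -1)%R = (d %| m + 1)%N.
Proof. by move=> d1; rewrite -Zd0 // natrD addr_eq0. Qed.

Lemma Zd_eq1 d m : (1 < d)%N -> (0 < m)%N -> ((m%:R : 'Z_d) == 1)%R = (d %| m - 1)%N.
Proof. by move=> d1 m0; rewrite -Zd0 // natrB // subr_eq0. Qed.

Lemma ord_arg (R : nzRingType) (P : R) t r : (P ^+ t = -1)%R -> (P ^+ r = 1)%R ->
  (r < 2 * t)%N -> ((1 : R) != -1)%R ->
  (forall t', (0 < t')%N -> (t' < t)%N -> (P ^+ t' != -1)%R) -> r = 0%N.
Proof.
move=> hPt hPr r2t h1N1 hmin.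
case: (ltngtP r t) => hrt.
- case: (posnP r) => // r0; exfalso.
  have h1 : (0 < t - r)%N by rewrite subn_gt0.
  have h2 : (t - r < t)%N by rewrite ltn_subrL r0 (leq_ltn_trans (leq0n r) hrt).
  move: (hmin _ h1 h2); rewrite -hPt.
  have -> : t = (r + (t - r))%N by rewrite subnKC // ltnW.
  by rewrite exprD hPr mul1r addKn eqxx.
- exfalso.
  have h1 : (0 < r - t)%N by rewrite subn_gt0.
  have h2 : (r - t < t)%N by rewrite ltn_subLR ?addnn -?mul2n // ltnW.
  move: (hmin _ h1 h2); move: hPr.
  have -> : r = (t + (r - t))%N by rewrite subnKC // ltnW.
  rewrite exprD hPt mulN1r addKn => /eqP; rewrite -eqr_oppLR => /eqP ->.
  by rewrite eqxx.
- by exfalso; move: h1N1; rewrite -[X in X != _]hPr -hPt hrt eqxx.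
Qed.

Lemma NT p d t v :
  odd d -> (3 <= d)%N -> (0 < p)%N -> (0 < t)%N -> (d %| p ^ t + 1)%N ->
  (forall t' : nat, (0 < t')%N -> (t' < t)%N -> ~~ (d %| p ^ t' + 1)%N) ->
  (0 < v)%N -> (p ^ v = 1 %[mod 2 * d])%N ->
  exists s, [/\ (0 < s)%N, v = (2 * t * s)%N, (d %| p ^ v - 1)%N,
     (odd s -> d %| p ^ (t * s) + 1)%N & (~~ odd s -> d %| p ^ (t * s) - 1)%N].
Proof.
move=> dodd d3 p0 t0 dt tmin v0 hv.
have d1 : (1 < d)%N by apply: leq_trans d3.
pose P : 'Z_d := (p%:R)%R.
have hPt : (P ^+ t = -1)%R by apply/eqP; rewrite /P -natrX Zd_eqN1.
have hdv : (d %| p ^ v - 1)%N.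
  move/eqP: hv; rewrite eqn_mod_dvd ?expn_gt0 ?p0 // => h.
  by apply: dvdn_trans h; apply: dvdn_mull.
have hPv : (P ^+ v = 1)%R by apply/eqP; rewrite /P -natrX Zd_eq1 // expn_gt0 p0.
have hmin t' : (0 < t')%N -> (t' < t)%N -> (P ^+ t' != -1)%R.
  by move=> a b; rewrite /P -natrX Zd_eqN1 // tmin.
have h1N1 : ((1 : 'Z_d) != -1)%R.
  have := Zd_eqN1 1 d1; rewrite [(1%:R)%R]/= => ->; apply/negP => /dvdn_leq h.
  by have := leq_trans d3 (h isT).
have hP2t : (P ^+ (2 * t) = 1)%R by rewrite mulnC exprM hPt expr2 mulrNN mulr1.
have hPr : (P ^+ (v %% (2 * t)) = 1)%R.
  by move: hPv; rewrite {1}(divn_eq v (2 * t)) exprD (mulnC (v %/ _)%N) exprM hP2t expr1n mul1r.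
have r2t : (v %% (2 * t) < 2 * t)%N by rewrite ltn_mod muln_gt0 t0.
have r0 := ord_arg hPt hPr r2t h1N1 hmin.
have e : v = (v %/ (2 * t) * (2 * t))%N by rewrite {1}(divn_eq v (2 * t)) r0 addn0.
exists (v %/ (2 * t))%N; split.
- by rewrite lt0n; apply/eqP => s0; move: v0; rewrite e s0.
- by rewrite {1}e mulnC.
- exact: hdv.
- by move=> so; rewrite -Zd_eqN1 // natrX exprM hPt -signr_odd so expr1.
- move=> se; rewrite -Zd_eq1 ?expn_gt0 ?p0 //; apply/eqP.
  by rewrite natrX exprM hPt -signr_odd (negbTE se) expr0.
Qed.
Local Open Scope ring_scope.

Lemma cardF2 (F : finFieldType) : (1 < #|F|)%N.
Proof.
apply: (@leq_trans #|[set (0:F); 1]|); last exact: max_card.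
by rewrite cards2 eq_sym oner_neq0.
Qed.

Lemma unity_nz (F : finFieldType) (x : F) : x != 0 -> x ^+ #|F|.-1 = 1.
Proof.
move=> xn0; apply: (mulfI xn0); rewrite mulr1 -exprS prednK ?expf_card //.
exact: ltnW (cardF2 F).
Qed.

Lemma prim_exists (F : finFieldType) : {g : F | (#|F|.-1).-primitive_root g}.
Proof.
set n := #|F|.-1.
have n0 : (0 < n)%N by rewrite /n -subn1 subn_gt0 cardF2.
have hu : all n.-unity_root (enum (predC1 (0:F))).
  by apply/allP => x; rewrite mem_enum /= => xn0; rewrite unity_rootE unity_nz.
have := has_prim_root n0 hu (enum_uniq _).
rewrite -cardE cardC1 leqnn => /(_ isT) /hasP => h.
have h' : exists x : F, n.-primitive_root x by case: h => x _ ?; exists x.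
by exists (xchoose h'); exact: (xchooseP h').
Qed.

Section GPS.
Variables (F : finFieldType) (d : nat) (g : F).
Hypothesis gprim : (#|F|.-1).-primitive_root g.
Hypothesis dn : (d %| #|F|.-1)%N.
Hypothesis d3 : (2 < d)%N.
Local Notation n := #|F|.-1.

Definition isP (y : F) := [exists z : F, (z != 0) && (z ^+ d == y)].

Lemma n_gt0 : (0 < n)%N. Proof. exact: prim_order_gt0 gprim. Qed.

Lemma g_nz : g != 0.
Proof.
apply/eqP => g0; have := prim_expr_order gprim; rewrite g0 expr0n.
by case: n n_gt0 => // m _ /eqP; rewrite eq_sym oner_eq0.
Qed.

Lemma log_ex x : x != 0 -> exists j, x = g ^+ j.
Proof. by move=> xn0; have [j ->] := prim_rootP gprim (unity_nz xn0); exists j. Qed.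

Lemma expg_modd i j : g ^+ i = g ^+ j -> (i = j %[mod d])%N.
Proof.
move/eqP; rewrite (eq_prim_root_expr gprim) => /eqP h.
by rewrite -(modn_dvdm i dn) -(modn_dvdm j dn) h.
Qed.

Lemma isP_exp i : isP (g ^+ (d * i)).
Proof.
apply/existsP; exists (g ^+ i); rewrite expf_neq0 ?g_nz //=.
by rewrite -exprM mulnC.
Qed.

Lemma isP_log y : isP y -> exists i, y = g ^+ (d * i).
Proof.
case/existsP => z /andP [zn0 /eqP <-]; have [j ->] := log_ex zn0.
by exists j; rewrite -exprM mulnC.
Qed.

Lemma isP_dvd m : isP (g ^+ m) -> (d %| m)%N.
Proof.
case/isP_log => i /expg_modd h; apply/dvdnP.
by exists ((m %/ d))%N; rewrite {1}(divn_eq m d) h mulnC modnMr addn0.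
Qed.

Lemma isP_nz y : isP y -> y != 0.
Proof. by case/existsP => z /andP [zn0 /eqP <-]; rewrite expf_neq0. Qed.

Lemma isPM a b : isP a -> isP b -> isP (a * b).
Proof.
case/existsP => z /andP [zn0 /eqP <-]; case/existsP => w /andP [wn0 /eqP <-].
by apply/existsP; exists (z * w); rewrite mulf_neq0 //= exprMn.
Qed.

Lemma isPV a : isP a -> isP a^-1.
Proof.
case/existsP => z /andP [zn0 /eqP <-].
by apply/existsP; exists z^-1; rewrite invr_eq0 zn0 /= exprVn.
Qed.

Lemma isP_mulr b y : isP b -> isP (y * b) = isP y.
Proof.
move=> Pb; apply/idP/idP => [Pyb|]; last by move=> Py; apply: isPM.
have -> : y = (y * b) * b^-1 by rewrite mulrK // unitfE isP_nz.
by apply: isPM => //; apply: isPV.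
Qed.

Lemma notP_g : ~~ isP g.
Proof.
apply/negP => /(@isP_dvd 1) h.
by have := leq_trans d3 (dvdn_leq (ltn0Sn 0) h).
Qed.

Lemma cliqueP (S : {set F}) x y : gp_clique d S -> x \in S -> y \in S -> x != y -> isP (x - y).
Proof.
by move=> /forall_inP /(_ x) h xS yS nxy; move: (h xS) => /forall_inP /(_ y yS) /implyP /(_ nxy) /andP [].
Qed.

Lemma clique_inj (S : {set F}) a : gp_clique d S -> a != 0 -> ~~ isP a ->
  {in setX S S &, injective (fun u : F * F => u.1 + a * u.2)}.
Proof.
move=> cS an0 nPa [c1 c2] [e1 e2]; rewrite !in_setX /= => /andP [c1S c2S] /andP [e1S e2S] eq.
have h : c1 - e1 = a * (e2 - c2).
  by move: eq => /= eq; rewrite -[c1](addrK (a * c2)) eq; ring.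
case: (eqVneq c2 e2) => [c2e2|c2e2].
  by move: h; rewrite c2e2 subrr mulr0 => /eqP; rewrite subr_eq0 => /eqP ->.
have Pz : isP (e2 - c2) by apply: (cliqueP cS) => //; rewrite eq_sym.
case: (eqVneq c1 e1) => [c1e1|c1e1].
  by move: h; rewrite c1e1 subrr => /esym/eqP; rewrite mulf_eq0 (negbTE an0) (negbTE (isP_nz Pz)).
have Pc : isP (c1 - e1) by apply: (cliqueP cS).
by move: Pc; rewrite h isP_mulr // (negbTE nPa).
Qed.

Lemma clique_sq (S : {set F}) : gp_clique d S -> (#|S| * #|S| <= #|F|)%N.
Proof.
move=> cS; rewrite -cardsX -(card_in_imset (clique_inj cS g_nz notP_g)).
exact: max_card.
Qed.

Lemma clique_bij (S : {set F}) a w : gp_clique d S -> (#|S| * #|S|)%N = #|F| ->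
  a != 0 -> ~~ isP a ->
  (\sum_(u in setX S S) ((u.1 + a * u.2)%R == w))%N = 1%N.
Proof.
move=> cS hc an0 nPa.
have inj := clique_inj cS an0 nPa.
have im : (fun u : F * F => u.1 + a * u.2) @: setX S S = setT.
  by apply/eqP; rewrite eqEcard subsetT cardsT card_in_imset // cardsX hc leqnn.
have : w \in (fun u : F * F => u.1 + a * u.2) @: setX S S by rewrite im inE.
case/imsetP => u uS ->.
rewrite (bigD1 u) //= eqxx big1 ?addn0 // => u' /andP [u'S nu'].
by case: eqP => // /(inj _ _ u'S uS) /eqP; rewrite (negbTE nu').
Qed.

Lemma frobB Q (x y : F) : [pchar F].-nat Q -> (x - y) ^+ Q = x ^+ Q - y ^+ Q.
Proof.
move=> hQ; apply/eqP; rewrite eq_sym subr_eq -exprDn_pchar //.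
by rewrite subrK.
Qed.

Lemma fixQ_isP Q w : (#|F| = Q * Q)%N -> (1 < Q)%N -> (d %| Q + 1)%N ->
  w != 0 -> w ^+ Q = w -> isP w.
Proof.
move=> hF Q1 dQ wn0 hw; have [j wj] := log_ex wn0.
have hn : n = ((Q + 1) * Q.-1)%N by rewrite hF; case: Q Q1 {hF dQ hw} => // Q' _; rewrite /= mulnS; nia.
move: hw; rewrite wj -exprM => /eqP; rewrite (eq_prim_root_expr gprim) eqn_mod_dvd; last first.
  by rewrite leq_pmulr // ltnW.
have -> : (j * Q - j = j * Q.-1)%N by rewrite -subn1 mulnBr muln1.
rewrite hn dvdn_pmul2r; last by rewrite -subn1 subn_gt0.
move=> /(dvdn_trans dQ) /dvdnP [k ->]; rewrite mulnC; exact: isP_exp.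
Qed.

Lemma sub_clique Q : [pchar F].-nat Q -> (#|F| = Q * Q)%N -> (1 < Q)%N -> (d %| Q + 1)%N ->
  exists S : {set F}, gp_clique d S /\ #|S| = Q.
Proof.
move=> hQ hF Q1 dQ.
have hn : n = ((Q + 1) * Q.-1)%N by rewrite hF; case: Q Q1 {hF dQ hQ} => // Q' _; rewrite /= mulnS; nia.
have hid i : ((Q + 1) * i * Q = i * n + (Q + 1) * i)%N.
  rewrite hn; case: Q Q1 {hF dQ hQ hn} => // Q' _ /=; nia.
pose S := 0 |: [set g ^+ ((Q + 1) * val i) | i : 'I_Q.-1].
have fixS x : x \in S -> x ^+ Q = x.
  rewrite !inE => /orP [/eqP -> | /imsetP [i _ ->]]; first by rewrite expr0n gtn_eqF // ltnW.
  apply/eqP; rewrite -exprM (eq_prim_root_expr gprim).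
  by rewrite hid modnMDl.
exists S; split.
  apply/forall_inP => x xS; apply/forall_inP => y yS; apply/implyP => nxy.
  rewrite /gp_adj nxy /=; apply: (@fixQ_isP Q) => //; first by rewrite subr_eq0.
  by rewrite frobB // !fixS.
rewrite cardsU1 card_imset.
  rewrite card_ord; have -> : (0 \notin [set g ^+ ((Q + 1) * val i) | i : 'I_Q.-1]).
    by apply/imsetP => [[i _ /esym/eqP]]; rewrite expf_eq0 (negbTE g_nz) andbF.
  by rewrite add1n prednK // ltnW.
move=> i j /eqP; rewrite (eq_prim_root_expr gprim) !modn_small ?hn ?ltn_pmul2l ?addn1 ?ltn_ord //.
by rewrite eqn_pmul2l ?addn1 // => /eqP /val_inj.
Qed.

Definition Hs := [set y | isP y].

Lemma n_d_gt0 : (0 < n %/ d)%N.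
Proof. by rewrite divn_gt0 ?(ltnW (leq_ltn_trans (isT : 0 < 2)%N d3)) // dvdn_leq // n_gt0. Qed.

Lemma cardH : (#|Hs| * d = n)%N.
Proof.
have d0 : (0 < d)%N by apply: leq_ltn_trans d3.
have -> : Hs = [set g ^+ (d * val i) | i : 'I_(n %/ d)].
  apply/setP => y; rewrite inE; apply/idP/imsetP => [/isP_log [i ->] | [i _ ->]]; last exact: isP_exp.
  exists (Ordinal (ltn_pmod i n_d_gt0)) => //=.
  apply/eqP; rewrite (eq_prim_root_expr gprim) muln_modr (mulnC d (n %/ d)%N) divnK //.
  by rewrite modn_mod.
rewrite card_imset ?card_ord ?divnK //.
have ltd k : (k < n %/ d)%N -> (d * k < n)%N.
  by move=> hk; rewrite -[X in (_ < X)%N](divnK dn) mulnC ltn_pmul2r.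
move=> i j /eqP; rewrite (eq_prim_root_expr gprim) !modn_small ?ltd ?ltn_ord //.
by rewrite eqn_pmul2l // => /eqP /val_inj.
Qed.

Lemma notP_g2 : ~~ isP (g ^+ 2).
Proof.
apply/negP => /isP_dvd h.
by have := leq_trans d3 (dvdn_leq (isT : 0 < 2)%N h).
Qed.

Lemma notP_gx y : isP y -> g * y != g ^+ 2.
Proof.
case/isP_log => i ->; apply/negP => /eqP; rewrite -exprS => /expg_modd.
rewrite -addn1 mulnC modnMDl !modn_small //; exact: ltnW.
Qed.

Definition Nc := (\sum_(u in setX Hs Hs) (((u.1 + g * u.2)%R == g ^+ 2) : nat))%N.

Lemma sumH_case (C : {set F}) v w : gp_clique d C -> v \in setX C C -> w \in setX C C ->
  (\sum_(u in setX Hs Hs) (((u.1 * (v.1 - w.1) + u.2 * (g * (v.2 - w.2)))%R == g ^+ 2) : nat))%N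
  = (((v.1 != w.1) && (v.2 != w.2)) * Nc)%N.
Proof.
case: v => v1 v2; case: w => w1 w2 => cC; rewrite !in_setX /= => /andP [v1C v2C] /andP [w1C w2C].
case: (eqVneq v1 w1) => e1 /=.
  rewrite big1 // => -[u1 u2]; rewrite in_setX !inE /= => /andP [_ P2].
  rewrite e1 subrr mulr0 add0r.
  case: (eqVneq v2 w2) => e2.
    by rewrite e2 subrr !mulr0 eq_sym expf_eq0 (negbTE g_nz) andbF.
  have Pz : isP (v2 - w2) by apply: (cliqueP cC).
  by rewrite mulrCA (negbTE (notP_gx (isPM P2 Pz))).
have Pz1 : isP (v1 - w1) by apply: (cliqueP cC).
case: (eqVneq v2 w2) => e2 /=.
  rewrite big1 // => -[u1 u2]; rewrite in_setX !inE /= => /andP [P1 _].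
  rewrite e2 subrr !mulr0 addr0; case: eqP => // h.
  by move: (isPM P1 Pz1); rewrite h (negbTE notP_g2).
have Pz2 : isP (v2 - w2) by apply: (cliqueP cC).
rewrite mul1n /Nc; symmetry; rewrite (reindex_inj (h := fun u : F * F => (u.1 * (v1 - w1), u.2 * (v2 - w2)))) /=.
  apply: eq_big => u; first by rewrite !in_setX !inE /= !isP_mulr.
  by move=> _; rewrite mulrCA.
move=> [a b] [c e] /= [] /(mulIf (isP_nz Pz1)) -> /(mulIf (isP_nz Pz2)) ->.
by [].
Qed.

Lemma count_pairs (C : {set F}) v : v \in setX C C ->
  (\sum_(w in setX C C) (((v.1 != w.1) && (v.2 != w.2)) : nat))%N = (#|C|.-1 * #|C|.-1)%N.
Proof.
case: v => v1 v2; rewrite in_setX /= => /andP [v1C v2C].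
transitivity (\sum_(w in setX (C :\ v1) (C :\ v2)) 1)%N.
  rewrite big_mkcond [RHS]big_mkcond /=; apply: eq_bigr => w _; case: w => w1 w2.
  rewrite !in_setX !in_setD1 /= (eq_sym w1) (eq_sym w2).
  by case: (v1 == w1); case: (w1 \in C); case: (v2 == w2); case: (w2 \in C).
have e1 : #|C :\ v1| = #|C|.-1 by rewrite (cardsD1 v1 C) v1C.
have e2 : #|C :\ v2| = #|C|.-1 by rewrite (cardsD1 v2 C) v2C.
by rewrite sum1_card cardsX e1 e2.
Qed.

Lemma no_big_clique Q (C : {set F}) : odd d -> (#|F| = Q * Q)%N -> (1 < Q)%N ->
  gp_clique d C -> #|C| = Q -> (d %| Q - 1)%N -> False.
Proof.
move=> dodd hF Q1 cC hC dQ.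
have hn : n = ((Q + 1) * Q.-1)%N by rewrite hF; case: Q Q1 {hF dQ hC} => // Q' _; rewrite /= mulnS; nia.
have hQQ : (#|C| * #|C|)%N = #|F| by rewrite hC hF.
pose E (u v w : F * F) := ((u.1 * (v.1 - w.1) + u.2 * (g * (v.2 - w.2)))%R == g ^+ 2 : nat).
have hA : (\sum_(u in setX Hs Hs) \sum_(v in setX C C) \sum_(w in setX C C) E u v w
           = #|Hs| * #|Hs| * (Q * Q))%N.
  rewrite -cardsX -sum_nat_const; apply: eq_bigr => -[u1 u2]; rewrite in_setX !inE /= => /andP [P1 P2].
  rewrite -hC -cardsX -sum1_card; apply: eq_bigr => -[v1 v2] _.
  have h1 : u1 != 0 := isP_nz P1.
  have Pq : isP (u2 / u1) := isPM P2 (isPV P1).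
  have a'n0 : g * (u2 / u1) != 0 := mulf_neq0 g_nz (isP_nz Pq).
  have nPa' : ~~ isP (g * (u2 / u1)) by rewrite isP_mulr // notP_g.
  rewrite -(clique_bij (v1 + g * (u2 / u1) * v2 - g ^+ 2 / u1) cC hQQ a'n0 nPa').
  apply: eq_bigr => -[w1 w2] _; rewrite /E /=; congr nat_of_bool.
  have key : u1 * (v1 - w1) + u2 * (g * (v2 - w2)) - g ^+ 2 =
             u1 * ((v1 + g * (u2 / u1) * v2 - g ^+ 2 / u1) - (w1 + g * (u2 / u1) * w2)).
    by field.
  by rewrite -subr_eq0 key mulf_eq0 (negbTE h1) /= subr_eq0 eq_sym.
have hB : (\sum_(u in setX Hs Hs) \sum_(v in setX C C) \sum_(w in setX C C) E u v w
           = Q * Q * (Q.-1 * Q.-1 * Nc))%N.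
  rewrite exchange_big (eq_bigr (fun _ => Q.-1 * Q.-1 * Nc)%N) ?sum_nat_const ?cardsX ?hC //.
  move=> v vC; rewrite exchange_big /=.
  rewrite (eq_bigr (fun w => (((v.1 != w.1) && (v.2 != w.2)) * Nc)%N)).
    by rewrite -big_distrl /= count_pairs // hC.
  by move=> w wC; rewrite /E (sumH_case cC vC wC).
have e : (#|Hs| * #|Hs| * (Q * Q) = Q * Q * (Q.-1 * Q.-1 * Nc))%N by rewrite -hA hB.
have e2 : ((Q + 1) * (Q + 1) * (Q.-1 * Q.-1 * (Q * Q)) = Nc * d * d * (Q.-1 * Q.-1 * (Q * Q)))%N.
  transitivity ((#|Hs| * d) * (#|Hs| * d) * (Q * Q))%N; first by rewrite cardH hn; ring.
  transitivity (d * d * (#|Hs| * #|Hs| * (Q * Q)))%N; first by ring.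
  by rewrite e; ring.
have QR : (0 < Q.-1 * Q.-1 * (Q * Q))%N by rewrite !muln_gt0 -subn1 subn_gt0 Q1 ltnW.
have e3 : ((Q + 1) * (Q + 1) = Nc * d * d)%N by apply/eqP; rewrite -(eqn_pmul2r QR) e2.
have : (d %| (Q + 1) * (Q + 1))%N by rewrite e3 dvdn_mull.
have -> : ((Q + 1) * (Q + 1) = (Q - 1) * (Q + 3) + 4)%N.
  by case: Q Q1 {hF hC dQ hn hQQ hA hB e e2 QR e3 E} => // Q' _; nia.
rewrite dvdn_addr; last by apply: dvdn_mulr.
move=> h; have h4 : (d <= 4)%N := dvdn_leq (isT : (0 < 4)%N) h.
have : (d == 3) || (d == 4) by lia.
by case/orP => /eqP E3; [rewrite E3 in h | rewrite E3 in dodd].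
Qed.

End GPS.
Local Close Scope ring_scope.

Theorem proposition4p6 (p d t v : nat) (F : finFieldType) :
  prime p -> odd p ->
  odd d -> (3 <= d)%N ->
  (0 < t)%N -> (d %| p ^ t + 1)%N ->
  (forall t' : nat, (0 < t')%N -> (t' < t)%N -> ~~ (d %| p ^ t' + 1)%N) ->
  (0 < v)%N -> #|F| = (p ^ v)%N -> (p ^ v = 1 %[mod 2 * d])%N ->
  exists s : nat, [/\ (0 < s)%N, v = (2 * t * s)%N,
    (~~ odd s -> gp_omega F d < p ^ (v %/ 2))%N &
    (odd s -> (d %| p ^ (v %/ 2) + 1)%N /\ gp_omega F d = (p ^ (v %/ 2))%N)].
Proof.
move=> pp po dodd d3 t0 dt tmin v0 hF hv.
have p0 : (0 < p)%N := prime_gt0 pp.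
have [s [s0 vs hdv hodd heven]] := NT dodd d3 p0 t0 dt tmin v0 hv.
have v2 : (v %/ 2 = t * s)%N by rewrite vs -mulnA mulKn.
have hFQ : #|F| = (p ^ (t * s) * p ^ (t * s))%N by rewrite hF -expnD vs; congr (p ^ _); lia.
have Q1 : (1 < p ^ (t * s))%N.
  by rewrite -[X in (X < _)%N](expn0 p) ltn_exp2l ?prime_gt1 // muln_gt0 t0 s0.
have [g gprim] := prim_exists F.
have dn : (d %| #|F|.-1)%N by rewrite hF -subn1.
have pch : p \in [pchar F]%R := card_finPcharP hF pp.
have hQ : [pchar F]%R.-nat (p ^ (t * s)).
  by rewrite (eq_pnat _ (pcharf_eq pch)) pnatX pnat_id.
have up : (gp_omega F d <= p ^ (t * s))%N.
  apply/bigmax_leqP => S cS; have := clique_sq gprim dn d3 cS; rewrite hFQ => h.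
  by rewrite leqNgt; apply/negP => h'; move: h; rewrite leqNgt ltn_mul.
exists s; rewrite v2; split => //.
- move=> se; rewrite ltn_neqAle up andbT; apply/negP => /eqP hom.
  have c0 : gp_clique d (set0 : {set F}) by apply/forall_inP => x; rewrite inE.
  move: hom; rewrite /gp_omega (bigmax_eq_arg set0 c0).
  case: arg_maxnP => // C cC _ hC.
  exact: (no_big_clique gprim dn d3 dodd hFQ Q1 cC hC (heven se)).
- move=> so; split; first exact: hodd.
  apply/eqP; rewrite eqn_leq up /=.
  have [S [cS hS]] := sub_clique gprim dn d3 hQ hFQ Q1 (hodd so).
  by rewrite -hS; apply: leq_bigmax_cond.
Qed.
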